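(* Let $\mathcal{G}:H\rtimes G\rightrightarrows G$ be a Lie 2-group with Lie 2-algebra $\mathfrak{G}:\mathfrak{h}\rtimes\mathfrak{g}\rightrightarrows\mathfrak{g}$ given by the crossed module $\phi:\mathfrak{h}\to\mathfrak{g}$. Then the groupoid $\mathfrak{G}^*:(\mathfrak{h}\rtimes\mathfrak{g})^*\rightrightarrows\mathfrak{h}^*$, with group structure given by vector addition and with the Lie–Poisson structure on $(\mathfrak{h}\rtimes\mathfrak{g})^*$, is a Poisson 2-group.
   Context: A Lie 2-group is a groupoid object in the category of Lie groups; it is described by a crossed module of Lie groups, with arrow group $H\rtimes G$ (where $H=\ker\mathtt{s}$) and object group $G$. Its Lie 2-algebra is the action groupoid $\mathfrak{h}\rtimes\mathfrak{g}\rightrightarrows\mathfrak{g}$ of the crossed module of Lie algebras $\phi:\mathfrak{h}\to\mathfrak{g}$, with source $(a,x)\mapsto x$ and target $(a,x)\mapsto\phi(a)+x$. The groupoid $\mathfrak{G}^*$ has arrows $(\mathfrak{h}\rtimes\mathfrak{g})^*\cong\mathfrak{h}^*\times\mathfrak{g}^*$, objects $\mathfrak{h}^*$, source $\mathtt{s}(\alpha,\theta)=\alpha-\phi^*(\theta)$, target $\mathtt{t}(\alpha,\theta)=\alpha$, and multiplication $(\alpha,\theta)\cdot(\alpha-\phi^*\theta,\theta')=(\alpha,\theta+\theta')$ (the action groupoid of $\mathfrak{g}^*$ acting on $\mathfrak{h}^*$ by translations via $-\phi^*$, with source and target reversed). The Lie–Poisson structure on the dual $\mathfrak{k}^*$ of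 a Lie algebra $\mathfrak{k}$ is $\{f,g\}(\xi)=\langle\xi,[df_\xi,dg_\xi]\rangle$. A Poisson groupoid is a Lie groupoid with a Poisson structure on its arrows whose multiplication graph is coisotropic in $M_1\times M_1\times\overline{M_1}$; a Poisson 2-group is a Lie 2-group that is a Poisson groupoid and whose arrow group is a Poisson–Lie group with the same bivector. *)

(* Defs.v *)
From HB Require Import structures.
From mathcomp Require Import all_boot all_order all_algebra.
Set Implicit Arguments. Unset Strict Implicit. Unset Printing Implicit Defensive.
Import Order.TTheory GRing.Theory Num.Theory.
Local Open Scope ring_scope.

Section Defs.
Variable R : realFieldType.

Definition bilinear_map (U V W : lmodType R) (f : U -> V -> W) : Prop :=
  (forall (a : R) x y z, f (a *: x + y) z = a *: f x z + f y z) /\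
  (forall (a : R) x y z, f z (a *: x + y) = a *: f z x + f z y).

Definition lie_bracket (V : lmodType R) (br : V -> V -> V) : Prop :=
  [/\ bilinear_map br,
      forall x, br x x = 0 &
      forall x y z, br x (br y z) + br y (br z x) + br z (br x y) = 0].

Definition crossed_module (hT gT : vectType R) (brh : hT -> hT -> hT)
    (brg : gT -> gT -> gT) (act : gT -> hT -> hT) (phi : 'Hom(hT, gT)) : Prop :=
  lie_bracket brh /\ lie_bracket brg /\ bilinear_map act /\
  (forall x y a, act (brg x y) a = act x (act y a) - act y (act x a)) /\
  (forall x a b, act x (brh a b) = brh (act x a) b + brh a (act x b)) /\
  (forall x a, phi (act x a) = brg x (phi a)) /\
  (forall a b, act (phi a) b = brh a b).

Definition sd_bracket (hT gT : vectType R) (brh : hT -> hT -> hT)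
    (brg : gT -> gT -> gT) (act : gT -> hT -> hT) (p q : hT * gT) : hT * gT :=
  (brh p.1 q.1 + act p.2 q.1 - act q.2 p.1, brg p.2 q.2).

Definition dual (V : vectType R) := 'Hom(V, R^o).

(* identification (h ⋊ g)^* = h^* x g^* via this pairing *)
Definition arr_pair (hT gT : vectType R) (p : dual hT * dual gT) (u : hT * gT) : R :=
  (p.1 u.1 : R) + (p.2 u.2 : R).

Definition phistar (hT gT : vectType R) (phi : 'Hom(hT, gT)) (th : dual gT)
  : dual hT := (th \o phi)%VF.

Definition src (hT gT : vectType R) (phi : 'Hom(hT, gT))
  (p : dual hT * dual gT) : dual hT := p.1 - phistar phi p.2.
Definition tgt (hT gT : vectType R) (p : dual hT * dual gT) : dual hT := p.1.
(* (al, th) . (al - phi^* th, th') = (al, th + th'); only meaningful on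
   composable pairs *)
Definition gmul (hT gT : vectType R) (p q : dual hT * dual gT)
  : dual hT * dual gT := (p.1, p.2 + q.2).
Definition gunit (hT gT : vectType R) (al : dual hT) : dual hT * dual gT :=
  (al, 0).
Definition ginv (hT gT : vectType R) (phi : 'Hom(hT, gT))
  (p : dual hT * dual gT) : dual hT * dual gT := (p.1 - phistar phi p.2, - p.2).

(* ---------- Poisson structures on vector spaces ----------
   A vector space M whose cotangent spaces are all identified with C through
   a pairing pair : M -> C -> R.  A bivector field is pi : M -> C -> C -> R,
   pi p u v = pi_p(u, v). *)

(* Lie-Poisson structure on k^*: pi_xi(x, y) = <xi, [x, y]>, i.e.
   {f, g}(xi) = <xi, [df_xi, dg_xi]>. *)
Definition lie_poisson (K Kd : Type) (pair : Kd -> K -> R) (br : K -> K -> K)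
  (xi : Kd) (x y : K) : R := pair xi (br x y).

Definition prod_pair (M N CM CN : Type) (pM : M -> CM -> R) (pN : N -> CN -> R)
  (x : M * N) (u : CM * CN) : R := pM x.1 u.1 + pN x.2 u.2.
Definition prod_pi (M N CM CN : Type) (piM : M -> CM -> CM -> R)
  (piN : N -> CN -> CN -> R) (x : M * N) (u v : CM * CN) : R :=
  piM x.1 u.1 v.1 + piN x.2 u.2 v.2.
Definition opp_pi (M CM : Type) (pi : M -> CM -> CM -> R) (x : M) (u v : CM) : R :=
  - pi x u v.

(* A linear map F : M -> N is Poisson: for every point m and covectors u, v
   at F m, pi_N(F m)(u, v) = pi_M(m)(F^* u, F^* v), where F^* u is the pullback
   covector, characterized by <x, F^* u> = <F x, u>. *)
Definition poisson_map (M N CM CN : Type) (pM : M -> CM -> R) (pN : N -> CN -> R)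
  (piM : M -> CM -> CM -> R) (piN : N -> CN -> CN -> R) (F : M -> N) : Prop :=
  forall m (u v : CN) (u' v' : CM),
    (forall x, pM x u' = pN (F x) u) -> (forall x, pM x v' = pN (F x) v) ->
    piN (F m) u v = piM m u' v'.

(* A linear subspace C of M is coisotropic: for every point p of C and every
   conormal covector u (annihilating T_p C = C), pi^sharp_p(u) lies in T_p C = C. *)
Definition coisotropic (M CM : Type) (pM : M -> CM -> R)
  (pi : M -> CM -> CM -> R) (C : M -> Prop) : Prop :=
  forall p, C p -> forall u : CM, (forall c, C c -> pM c u = 0) ->
    exists c, C c /\ forall w, pM c w = pi p u w.

Definition groupoid (M1 M0 : Type) (s t : M1 -> M0) (e : M0 -> M1)
  (inv : M1 -> M1) (mul : M1 -> M1 -> M1) : Prop :=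
  [/\ (forall a b, s a = t b -> s (mul a b) = s b /\ t (mul a b) = t a),
      (forall a b c, s a = t b -> s b = t c -> mul (mul a b) c = mul a (mul b c)),
      (forall x, s (e x) = x /\ t (e x) = x),
      (forall a, mul (e (t a)) a = a /\ mul a (e (s a)) = a) &
      (forall a, [/\ s (inv a) = t a, t (inv a) = s a,
                     mul a (inv a) = e (t a) & mul (inv a) a = e (s a)])].

(* groupoid object in (abelian, here vector) groups: all structure maps are
   group homomorphisms; multiplication on the subgroup of composable pairs. *)
Definition two_group (M1 M0 : zmodType) (s t : M1 -> M0) (e : M0 -> M1)
  (inv : M1 -> M1) (mul : M1 -> M1 -> M1) : Prop :=
  [/\ groupoid s t e inv mul,
      (forall a b, s (a + b) = s a + s b /\ t (a + b) = t a + t b),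
      (forall x y, e (x + y) = e x + e y),
      (forall a b, inv (a + b) = inv a + inv b) &
      (forall a b a' b', s a = t b -> s a' = t b' ->
         mul (a + a') (b + b') = mul a b + mul a' b')].

(* Poisson groupoid: graph of multiplication coisotropic in M1 x M1 x \bar M1 *)
Definition poisson_groupoid (M1 M0 C : Type) (s t : M1 -> M0)
  (mul : M1 -> M1 -> M1) (pair : M1 -> C -> R) (pi : M1 -> C -> C -> R) : Prop :=
  coisotropic (prod_pair (prod_pair pair pair) pair)
              (prod_pi (prod_pi pi pi) (opp_pi pi))
              (fun x : M1 * M1 * M1 => s x.1.1 = t x.1.2 /\ x.2 = mul x.1.1 x.1.2).

Definition poisson_lie_additive (M1 : zmodType) (C : Type) (pair : M1 -> C -> R)
  (pi : M1 -> C -> C -> R) : Prop :=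
  poisson_map (prod_pair pair pair) pair (prod_pi pi pi) pi
              (fun x : M1 * M1 => x.1 + x.2).

Definition poisson_2group (M1 M0 : zmodType) (C : Type) (s t : M1 -> M0)
  (e : M0 -> M1) (inv : M1 -> M1) (mul : M1 -> M1 -> M1)
  (pair : M1 -> C -> R) (pi : M1 -> C -> C -> R) : Prop :=
  [/\ two_group s t e inv mul, poisson_groupoid s t mul pair pi &
      poisson_lie_additive pair pi].

End Defs.

(* Main.v *)
Require Import Defs.
From HB Require Import structures.
From mathcomp Require Import all_boot all_order all_algebra.
From mathcomp Require Import lra.
Import Order.TTheory GRing.Theory Num.Theory.
Set Implicit Arguments. Unset Strict Implicit.
Local Open Scope ring_scope.
Section H.
Variable R : realFieldType.
Variable V : vectType R.

Lemma hom_of (f : V -> R) :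
  (forall (a : R) x y, f (a *: x + y) = a * f x + f y) ->
  exists g : 'Hom(V, R^o), forall v, g v = f v.
Proof.
move=> Hf.
have f0 : f 0 = 0.
  by have := Hf 1 0 0; rewrite scaler0 addr0 mul1r => /(congr1 (fun z => z - f 0)); rewrite subrr addrK.
have fD x y : f (x + y) = f x + f y by have := Hf 1 x y; rewrite scale1r mul1r.
have fZ a x : f (a *: x) = a * f x by have := Hf a x 0; rewrite !addr0 f0 addr0.
pose X := vbasis (fullv : {vspace V}).
exists (\sum_(i < \dim (fullv : {vspace V})) f X`_i *: linfun (coord X i : V -> R^o)).
move=> v; rewrite sum_lfunE {2}(coord_vbasis (memvf v)).
rewrite (big_morph f fD f0); apply: eq_bigr => i _.
by rewrite scale_lfunE lfunE /= fZ mulrC.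
Qed.

Lemma nondeg (x : V) : (forall g : 'Hom(V, R^o), g x = 0) -> x = 0.
Proof.
move=> H; rewrite (coord_vbasis (memvf x)); apply: big1 => i _.
by have := H (linfun (coord (vbasis fullv) i : V -> R^o)); rewrite lfunE /= => ->; rewrite scale0r.
Qed.
End H.
Section B.
Variable R : realFieldType.
Variables (U V W : lmodType R) (f : U -> V -> W).
Hypothesis bf : bilinear_map f.
Lemma bD1 x y z : f (x + y) z = f x z + f y z.
Proof. by have := bf.1 1 x y z; rewrite !scale1r. Qed.
Lemma b01 z : f 0 z = 0.
Proof. by have := bD1 0 0 z; rewrite addr0 => /(congr1 (fun t => t - f 0 z)); rewrite subrr addrK. Qed.
Lemma bN1 x z : f (- x) z = - f x z.
Proof. by apply/eqP; rewrite -subr_eq0 opprK -bD1 addNr b01. Qed.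
Lemma bZ1 a x z : f (a *: x) z = a *: f x z.
Proof. by have := bf.1 a x 0 z; rewrite !addr0 b01 addr0. Qed.
Lemma bD2 x y z : f z (x + y) = f z x + f z y.
Proof. by have := bf.2 1 x y z; rewrite !scale1r. Qed.
Lemma b02 z : f z 0 = 0.
Proof. by have := bD2 0 0 z; rewrite addr0 => /(congr1 (fun t => t - f z 0)); rewrite subrr addrK. Qed.
Lemma bN2 x z : f z (- x) = - f z x.
Proof. by apply/eqP; rewrite -subr_eq0 opprK -bD2 addNr b02. Qed.
Lemma bZ2 a x z : f z (a *: x) = a *: f z x.
Proof. by have := bf.2 a x 0 z; rewrite !addr0 b02 addr0. Qed.
End B.

Lemma lie_anti (R : realFieldType) (V : lmodType R) (br : V -> V -> V) :
  lie_bracket br -> forall x y, br y x = - br x y.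
Proof.
move=> [bb alt _] x y; apply/eqP; rewrite -subr_eq0 opprK.
have := alt (x + y); rewrite (bD1 bb) !(bD2 bb) !alt add0r addr0 => <-.
by rewrite addrC.
Qed.

Lemma scaleRo (R : realFieldType) (a : R) (x : R^o) : a *: x = a * (x : R).
Proof. by []. Qed.

Lemma lfD (R : realFieldType) (U V : vectType R) (f : 'Hom(U, V)) a b :
  f (a + b) = f a + f b.
Proof. exact: raddfD. Qed.
Lemma lfN (R : realFieldType) (U V : vectType R) (f : 'Hom(U, V)) a :
  f (- a) = - f a.
Proof. exact: raddfN. Qed.

Section P.
Variables (R : realFieldType) (hT gT : vectType R).
Lemma arr_pair0 (w : hT * gT) : arr_pair (0 : dual hT * dual gT) w = 0.
Proof. by rewrite /arr_pair /= !zero_lfunE addr0. Qed.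
Lemma arr_pairD (p q : dual hT * dual gT) w :
  arr_pair (p + q) w = arr_pair p w + arr_pair q w.
Proof. by case: p q => [p1 p2] [q1 q2]; rewrite /arr_pair /= !add_lfunE addrACA. Qed.
Lemma arr_pair_eq (u u' : hT * gT) :
  (forall y, arr_pair y u' = arr_pair y u) -> u' = u.
Proof.
case: u u' => [u1 u2] [v1 v2] H.
have e1 : v1 = u1.
  apply/eqP; rewrite -subr_eq0; apply/eqP; apply: nondeg => g.
  have := H (g, 0); rewrite /arr_pair /= !zero_lfunE !addr0 => E.
  by rewrite linearB /= E subrr.
have e2 : v2 = u2.
  apply/eqP; rewrite -subr_eq0; apply/eqP; apply: nondeg => g.
  have := H (0, g); rewrite /arr_pair /= !zero_lfunE !add0r => E.
  by rewrite linearB /= E subrr.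
by rewrite e1 e2.
Qed.
End P.

Theorem mainTheorem5 (R : realFieldType) (hT gT : vectType R)
  (brh : hT -> hT -> hT) (brg : gT -> gT -> gT) (act : gT -> hT -> hT)
  (phi : 'Hom(hT, gT)) :
  crossed_module brh brg act phi ->
  poisson_2group (src phi) (@tgt R hT gT) (@gunit R hT gT) (ginv phi)
    (@gmul R hT gT) (@arr_pair R hT gT)
    (lie_poisson (@arr_pair R hT gT) (sd_bracket brh brg act)).
Proof.
move=> [lh [lg [bact [actbr [actder [equiv peif]]]]]].
have phD x y : phistar phi (x + y) = phistar phi x + phistar phi y by exact: comp_lfunDl.
have phN x : phistar phi (- x) = - phistar phi x by exact: comp_lfunNl.
have ph0 : phistar phi 0 = 0 by exact: comp_lfun0l.
split.
- split.
  + split.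
    * move=> [a1 a2] [b1 b2]; rewrite /src /tgt /gmul /= => Hab.
      by split=> //; rewrite phD opprD addrA Hab.
    * by move=> [a1 a2] [b1 b2] [c1 c2]; rewrite /gmul /= addrA.
    * by move=> x; rewrite /src /tgt /gunit /= ph0 subr0.
    * by move=> [a1 a2]; rewrite /gmul /gunit /tgt /src /= add0r addr0.
    * move=> [a1 a2]; rewrite /gmul /gunit /tgt /src /ginv /=.
      by rewrite phN opprK subrK subrr addNr.
  + move=> [a1 a2] [b1 b2]; rewrite /src /tgt /=.
    by rewrite phD opprD addrACA.
  + by move=> x y; rewrite /gunit -[RHS]/(x + y, 0 + 0) addr0.
  + move=> [a1 a2] [b1 b2]; rewrite /ginv /=.
    by rewrite phD opprD addrACA opprD.
  + move=> [a1 a2] [b1 b2] [c1 c2] [d1 d2] _ _; rewrite /gmul -[RHS]/(a1 + c1, a2 + b2 + (c2 + d2)) /=.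
    by rewrite addrACA.
- have [bh alth jh] := lh; have [bg altg jg] := lg.
  move=> [[[al th] [be th']] d] /= [Hs Hd] [[[x1 y1] [x2 y2]] [x3 y3]] Hann.
  move: Hs Hd; rewrite /src /tgt /gmul /= => Hbe Hd; subst be d.
  have ex : x1 + x2 + x3 = 0.
    apply: nondeg => g.
    have := Hann (((g,0),(g,0)),(g,0)).
    rewrite /src /tgt /gmul /= ph0 subr0 addr0 => /(_ (conj erefl erefl)).
    rewrite /prod_pair /arr_pair /= !zero_lfunE !linearD /=.
    lra.
  have ey : y1 + y3 - phi x2 = 0.
    apply: nondeg => g.
    have := Hann (((0,g),(- phistar phi g, 0)),(0,g)).
    rewrite /src /tgt /gmul /= sub0r addr0 => /(_ (conj erefl erefl)).
    rewrite /prod_pair /arr_pair /= !zero_lfunE opp_lfunE /phistar comp_lfunE !linearD linearN /=.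
    lra.
  have ey2 : y2 + y3 = 0.
    apply: nondeg => g.
    have := Hann (((0,0),(0, g)),(0,g)).
    rewrite /src /tgt /gmul /= ph0 subr0 add0r => /(_ (conj erefl erefl)).
    rewrite /prod_pair /arr_pair /= !zero_lfunE !linearD /=.
    lra.
  have e3 : x3 = - (x1 + x2) by apply/eqP; rewrite -addr_eq0 addrC ex.
  have e3' : y3 = - y2 by apply/eqP; rewrite -addr_eq0 addrC ey2.
  have e1 : y1 = phi x2 + y2.
    by move/eqP: ey; rewrite e3' subr_eq add0r subr_eq => /eqP.
  subst x3 y3 y1.
  pose be := al - phistar phi th.
  have [A1 HA1] : exists g : 'Hom(hT, R^o), forall w, g w = al (brh x1 w + act (phi x2 + y2) w).
    apply: hom_of => a w w' /=.
    by rewrite (bh.2) (bact.2) addrACA -scalerDr linearP /=.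
  have [T1 HT1] : exists g : 'Hom(gT, R^o), forall w, g w = th (brg (phi x2 + y2) w) - al (act w x1).
    apply: hom_of => a w w' /=.
    rewrite (bg.2) (bact.1) !linearP /= !scaleRo; lra.
  have [A2 HA2] : exists g : 'Hom(hT, R^o), forall w, g w = be (brh x2 w + act y2 w).
    apply: hom_of => a w w' /=.
    by rewrite (bh.2) (bact.2) addrACA -scalerDr linearP /=.
  have [T2 HT2] : exists g : 'Hom(gT, R^o), forall w, g w = th' (brg y2 w) - be (act w x2).
    apply: hom_of => a w w' /=.
    rewrite (bg.2) (bact.1) !linearP /= !scaleRo; lra.
  exists (((A1, T1), (A2, T2)), (A1, T1 + T2)) => /=; split; first split => //.
    apply/lfunP => w; rewrite add_lfunE opp_lfunE /phistar comp_lfunE HA1 HT1 HA2 /be.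
    rewrite add_lfunE opp_lfunE /phistar comp_lfunE.
    rewrite ?(bD1 bact) ?(bD2 bact) ?(bD1 bg) ?(bD2 bg) !peif (lie_anti lh x1 w).
    rewrite (lfD phi) -(peif x2 w) !equiv !peif.
    rewrite !lfD !lfN; lra.
  move=> [[[w11 w12] [w21 w22]] [w31 w32]].
  rewrite /prod_pair /prod_pi /opp_pi /lie_poisson /arr_pair /sd_bracket /=.
  rewrite !add_lfunE !HA1 !HT1 !HA2 !HT2 /be !add_lfunE !opp_lfunE /phistar !comp_lfunE.
  rewrite ?(bD1 bact) ?(bD2 bact) ?(bN1 bact) ?(bN2 bact) ?(bD1 bg) ?(bD2 bg) ?(bN1 bg) ?(bN2 bg) ?(bD1 bh) ?(bN1 bh) !peif.
  rewrite ?(bD1 bact) ?(bD2 bact) ?(bN1 bact) ?(bN2 bact) ?(bD1 bh) ?(bN1 bh).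
  rewrite -(peif x2 w21) !equiv !peif (lie_anti lg (phi x2) w32).
  rewrite !lfD !lfN.
  rewrite (equiv w22 x2) (equiv y2 w21) -(peif x2 w21) (equiv (phi x2) w21) !peif.
  rewrite ?lfD ?lfN ?lfD ?lfN; lra.
- move=> m u v u' v' Hu Hv.
  have E1 : u'.1 = u.
    apply: arr_pair_eq => y; have := Hu (y, 0).
    by rewrite /prod_pair /= arr_pair0 !addr0 => ->.
  have E2 : u'.2 = u.
    apply: arr_pair_eq => y; have := Hu (0, y).
    by rewrite /prod_pair /= arr_pair0 !add0r => ->.
  have F1 : v'.1 = v.
    apply: arr_pair_eq => y; have := Hv (y, 0).
    by rewrite /prod_pair /= arr_pair0 !addr0 => ->.
  have F2 : v'.2 = v.
    apply: arr_pair_eq => y; have := Hv (0, y).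
    by rewrite /prod_pair /= arr_pair0 !add0r => ->.
  by rewrite /prod_pi /lie_poisson E1 E2 F1 F2 arr_pairD.
Qed.
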